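(* Suppose the collective choice problem $\mathcal C$ satisfies Thin Individual Indifference. The following holds if and only if $\mathcal C$ is Manipulable: for every $\delta>0$ there exist $\epsilon_\delta>0$ and $T_\delta\in\mathbb N$ such that, whenever the policy space is restricted to any generic $\epsilon$-grid $X_\epsilon$ with $\epsilon<\epsilon_\delta$ and the amendment procedure has at least $T_\delta$ rounds, then for any initial default in $X_\epsilon$ the agenda setter's payoff is at least $u_A^*-\delta$ in every equilibrium.
   Context: Collective choice problem $\mathcal C$: voters $N=\{1,\dots,n\}$ ($n$ odd) and a non-voting agenda setter $A$ choose from a compact metrizable policy space $X$ with metric $d$; each player $i\in N\cup\{A\}$ has a complete, transitive, continuous preference $\succsim_i$ with continuous utility $u_i$. $x\succ_M y$ means a strict majority of voters strictly prefer $x$ to $y$. $X_A^*=\arg\max_X u_A$, $u_A^*=\max_{x\in X}u_A(x)$. $x$ is Improvable if some $y$ has $y\succ_A x$ and $y\succ_M x$; $\mathcal C$ is Manipulable if every $x\notin X_A^*$ is Improvable. For $i$ and $x$, $I_i(x)=\{y\in X: y\sim_i x\}$; $\mathcal C$ satisfies Thin Individual Indifference if $I_i(x)\setminus\{x\}$ has empty interior for every player $i$ and $x\in X$. For $A\subseteq X$, $d(x,A)=\inf_{y\in A}d(x,y)$. A generic $\epsilon$-grid is a finite set $X_\epsilon\subseteq X$ with $\max_{x\in X}d(x,X_\epsilon)<\epsilon$ on which all players' preferences are antisymmetric. Restricting the policy space to $X_\epsilon$ means all proposals and defaults lie in $X_\epsilon$ and preferences are the restrictions. Amendment procedure with $T$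 rounds: initial default $x^0$; in each round the agenda setter proposes a policy voted against the current default by simple majority; if it passes it becomes the new default, otherwise the default is unchanged; the final default is implemented. Strategies may depend on full histories and may be mixed. Equilibrium: subgame perfect equilibrium with as-if-pivotal voting (at histories where passage leads to continuation outcome $x$ and rejection to $y$ regardless of the composition of the vote, any voter with a strict preference between $x$ and $y$ votes for the option leading to her preferred outcome). *)

(* Defs.v *)
From Stdlib Require Import Rdefinitions.
From HB Require Import structures.
From mathcomp Require Import all_boot all_order all_algebra.
From mathcomp Require Import Rstruct.

Set Implicit Arguments.
Unset Strict Implicit.
Unset Printing Implicit Defensive.

Import Order.TTheory GRing.Theory Num.Theory.
Local Open Scope ring_scope.

Definition is_metric (X : Type) (d : X -> X -> R) : Prop :=
  [/\ (forall x y, 0 <= d x y),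
      (forall x y, d x y = 0 <-> x = y),
      (forall x y, d x y = d y x) &
      (forall x y z, d x z <= d x y + d y z)].

Definition dopen (X : Type) (d : X -> X -> R) (U : X -> Prop) : Prop :=
  forall x, U x -> exists r, 0 < r /\ forall y, d x y < r -> U y.

Definition dcompact (X : Type) (d : X -> X -> R) : Prop :=
  forall (I : Type) (U : I -> X -> Prop),
    (forall i, dopen d (U i)) -> (forall x, exists i, U i x) ->
    exists s : list I, forall x, exists i, List.In i s /\ U i x.

Definition dcontinuous (X : Type) (d : X -> X -> R) (f : X -> R) : Prop :=
  forall x e, 0 < e -> exists r, 0 < r /\ forall y, d x y < r -> `|f y - f x| < e.

(* players: Some i = voter i (i < n), None = the agenda setter A *)
Definition player (n : nat) := option 'I_n.

(* utility of a player (x ≿_p y  iff  util p x >= util p y) *)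
Definition util (X : Type) (n : nat) (u : 'I_n -> X -> R) (uA : X -> R)
  (p : player n) (x : X) : R :=
  match p with None => uA x | Some i => u i x end.

Definition maj_pref (X : Type) (n : nat) (u : 'I_n -> X -> R) (x y : X) : bool :=
  (n < 2 * #|[set i : 'I_n | (u i y < u i x)%R]|)%N.

Definition in_XAstar (X : Type) (uA : X -> R) (x : X) : Prop :=
  forall y, uA y <= uA x.

Definition improvable (X : Type) (n : nat) (u : 'I_n -> X -> R) (uA : X -> R)
  (x : X) : Prop :=
  exists y, uA x < uA y /\ maj_pref u y x.

Definition manipulable (X : Type) (n : nat) (u : 'I_n -> X -> R) (uA : X -> R)
  : Prop :=
  forall x, ~ in_XAstar uA x -> improvable u uA x.

(* Thin Individual Indifference: I_p(x) \ {x} has empty interior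
   (no open ball of positive radius is contained in it). *)
Definition thin_indifference (X : Type) (d : X -> X -> R) (n : nat)
  (u : 'I_n -> X -> R) (uA : X -> R) : Prop :=
  forall (p : player n) (x : X),
    ~ (exists y r, 0 < r /\
         forall z, d y z < r -> util u uA p z = util u uA p x /\ z <> x).

(* A generic eps-grid, given as an enumeration g : 'I_m -> X of its
   points: finite set, max_x d(x, X_eps) < eps, all players' preferences
   antisymmetric on X_eps. *)
Definition generic_grid (X : Type) (d : X -> X -> R) (n : nat)
  (u : 'I_n -> X -> R) (uA : X -> R) (eps : R) (m : nat) (g : 'I_m -> X)
  : Prop :=
  [/\ injective g,
      (exists r, r < eps /\ forall x, exists j, d x (g j) <= r) &
      (forall (p : player n) (j k : 'I_m),
          util u uA p (g j) = util u uA p (g k) -> g j = g k)].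

(* The amendment procedure on the grid 'I_m (policy g j for index j)   *)

(* one round: the proposal and the full vote profile (true = yes) *)
Definition round (m n : nat) := ('I_m * {ffun 'I_n -> bool})%type.
Definition history (m n : nat) := seq (round m n).

Definition passes (n : nat) (v : {ffun 'I_n -> bool}) : bool :=
  (n < 2 * #|[set i | v i]|)%N.

Definition cur_default (m n : nat) (x0 : 'I_m) (h : history m n) : 'I_m :=
  foldl (fun x r => if passes r.2 then r.1 else x) x0 h.

(* behaviour-strategy profile (mixed strategies, history dependent):
   propose h y  = probability A proposes y at history h;
   vote i h y   = probability voter i votes for proposal y at (h, y). *)
Record profile (m n : nat) := Profile {
  propose : history m n -> 'I_m -> R ;
  vote    : 'I_n -> history m n -> 'I_m -> R }.

Definition valid_profile (m n : nat) (s : profile m n) : Prop :=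
  [/\ (forall h y, 0 <= propose s h y),
      (forall h, \sum_(y : 'I_m) propose s h y = 1) &
      (forall i h y, 0 <= vote s i h y <= 1)].

Definition vote_prob (m n : nat) (s : profile m n) (h : history m n) (y : 'I_m)
  (v : {ffun 'I_n -> bool}) : R :=
  \prod_(i : 'I_n) (if v i then vote s i h y else 1 - vote s i h y).

(* expected value of f(final default) from the start of a round at
   history h with k rounds remaining *)
Fixpoint cont (m n : nat) (s : profile m n) (f : 'I_m -> R) (x0 : 'I_m)
  (k : nat) (h : history m n) : R :=
  match k with
  | 0 => f (cur_default x0 h)
  | k'.+1 =>
      \sum_(y : 'I_m) propose s h y *
        \sum_(v : {ffun 'I_n -> bool})
            vote_prob s h y v * cont s f x0 k' (rcons h (y, v))
  end.

(* expected value of f(final default) from the voting node (h, y),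
   with k rounds remaining after the current one *)
Definition vcont (m n : nat) (s : profile m n) (f : 'I_m -> R) (x0 : 'I_m)
  (k : nat) (h : history m n) (y : 'I_m) : R :=
  \sum_(v : {ffun 'I_n -> bool}) vote_prob s h y v * cont s f x0 k (rcons h (y, v)).

Definition unilateral (m n : nat) (p : player n) (s s' : profile m n) : Prop :=
  match p with
  | None => forall i h y, vote s' i h y = vote s i h y
  | Some i => (forall h y, propose s' h y = propose s h y) /\
              (forall j h y, j <> i -> vote s' j h y = vote s j h y)
  end.

(* subgame perfection in the T-round amendment game with policies g,
   initial default x0: no profitable unilateral deviation in any subgame
   (subgames start at proposal nodes h and at voting nodes (h, y)) *)
Definition subgame_perfect (X : Type) (n : nat) (u : 'I_n -> X -> R)
  (uA : X -> R) (m : nat) (g : 'I_m -> X) (T : nat) (x0 : 'I_m)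
  (s : profile m n) : Prop :=
  valid_profile s /\
  forall (p : player n) (s' : profile m n),
    valid_profile s' -> unilateral p s s' ->
    (forall h : history m n, (size h < T)%N ->
       cont s' (fun j => util u uA p (g j)) x0 (T - size h) h
       <= cont s (fun j => util u uA p (g j)) x0 (T - size h) h) /\
    (forall (h : history m n) (y : 'I_m), (size h < T)%N ->
       vcont s' (fun j => util u uA p (g j)) x0 (T - size h).-1 h y
       <= vcont s (fun j => util u uA p (g j)) x0 (T - size h).-1 h y).

(* As-if-pivotal voting: at a voting node (h, y) where every passing vote
   profile leads (with certainty) to final outcome x and every failing one
   leads (with certainty) to final outcome z, every voter with a strict
   preference between x and z votes for the option leading to her
   preferred outcome. *)
Definition as_if_pivotal (X : Type) (n : nat) (u : 'I_n -> X -> R)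
  (m : nat) (g : 'I_m -> X) (T : nat) (x0 : 'I_m) (s : profile m n) : Prop :=
  forall (h : history m n) (y : 'I_m), (size h < T)%N ->
  forall x z : 'I_m,
    (forall v, passes v -> forall w : 'I_m,
        cont s (fun j => (j == w)%:R) x0 (T - size h).-1 (rcons h (y, v))
        = (w == x)%:R) ->
    (forall v, ~~ passes v -> forall w : 'I_m,
        cont s (fun j => (j == w)%:R) x0 (T - size h).-1 (rcons h (y, v))
        = (w == z)%:R) ->
    forall i : 'I_n,
      (u i (g z) < u i (g x) -> vote s i h y = 1) /\
      (u i (g x) < u i (g z) -> vote s i h y = 0).

Definition equilibrium (X : Type) (n : nat) (u : 'I_n -> X -> R) (uA : X -> R)
  (m : nat) (g : 'I_m -> X) (T : nat) (x0 : 'I_m) (s : profile m n) : Prop :=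
  subgame_perfect u uA g T x0 s /\ as_if_pivotal u g T x0 s.

Definition setter_payoff (X : Type) (n : nat) (uA : X -> R) (m : nat)
  (g : 'I_m -> X) (T : nat) (x0 : 'I_m) (s : profile m n) : R :=
  cont s (fun j => uA (g j)) x0 T [::].

(* Main.v *)
Require Import Defs.
From Stdlib Require Import Rdefinitions.
From Stdlib Require List.
From Stdlib Require Import Classical.
From HB Require Import structures.
From mathcomp Require Import all_boot all_order all_algebra.
From mathcomp Require Import Rstruct.
From mathcomp Require Import lra.
Import Order.TTheory GRing.Theory Num.Theory.
Local Open Scope ring_scope.

Set Implicit Arguments.
Unset Strict Implicit.
Unset Printing Implicit Defensive.

Lemma sum_supp_const (I : finType) (w F : I -> R) c :
  (forall i, w i != 0 -> F i = c) -> \sum_i w i * F i = c * \sum_i w i.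
Proof.
move=> H; rewrite mulr_sumr; apply: eq_bigr => i _.
case: (eqVneq (w i) 0) => [->|/H ->]; first by rewrite !mulr0 mul0r.
by rewrite mulrC.
Qed.

Lemma sum_supp_le (I : finType) (w F : I -> R) c :
  (forall i, 0 <= w i) -> (forall i, w i != 0 -> F i <= c) ->
  \sum_i w i * F i <= c * \sum_i w i.
Proof.
move=> H0 H; rewrite mulr_sumr; apply: ler_sum => i _.
case: (eqVneq (w i) 0) => [->|/H Hi]; first by rewrite !mulr0 mul0r.
by rewrite mulrC; apply: ler_wpM2r.
Qed.

Lemma sum_supp_eq (I : finType) (w F : I -> R) c :
  (forall i, 0 <= w i) -> (forall i, F i <= c) ->
  c * \sum_i w i <= \sum_i w i * F i ->
  forall i, w i != 0 -> F i = c.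
Proof.
move=> H0 H Hs i wi.
have Hz : \sum_i w i * (c - F i) = 0.
  apply/eqP; rewrite eq_le; apply/andP; split.
    rewrite (eq_bigr (fun i => c * w i - w i * F i)); last first.
      by move=> j _; rewrite mulrBr mulrC.
    by rewrite sumrB -mulr_sumr subr_le0.
  by apply: sumr_ge0 => j _; apply: mulr_ge0 => //; rewrite subr_ge0.
have Hnn : forall j, predT j -> 0 <= w j * (c - F j).
  by move=> j _; apply: mulr_ge0 => //; rewrite subr_ge0.
have := psumr_eq0P Hnn Hz (i := i) isT.
move=> /eqP; rewrite mulf_eq0 (negbTE wi) /= subr_eq0 => /eqP ->.
by [].
Qed.

Lemma sum_pt (I : finType) (a : I) (F : I -> R) :
  \sum_i (i == a)%:R * F i = F a.
Proof.
rewrite (bigD1 a) //= eqxx mul1r big1 ?addr0 // => i /negbTE ->.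
by rewrite mul0r.
Qed.

Lemma sum_pt1 (I : finType) (a : I) : \sum_i ((i == a)%:R : R) = 1.
Proof.
by rewrite (bigD1 a) //= eqxx big1 ?addr0 // => i /negbTE ->.
Qed.

Section Votes.
Variables (m n : nat).
Implicit Types (s : profile m n) (h : history m n) (y : 'I_m) (v : {ffun 'I_n -> bool}).

Lemma sum_vote_prob s h y : \sum_v vote_prob s h y v = 1.
Proof.
rewrite /vote_prob.
have := bigA_distr_bigA (fun (i : 'I_n) (b : bool) =>
  if b then vote s i h y else 1 - vote s i h y).
move=> <-. rewrite big1 // => i _. rewrite big_bool /=. lra.
Qed.

Lemma vote_prob_ge0 s h y v : (forall i, 0 <= vote s i h y <= 1) -> 0 <= vote_prob s h y v.
Proof.
move=> H; apply: prodr_ge0 => i _; case: (v i); have := H i; case/andP => ? ?; lra.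
Qed.

Lemma vote_prob_supp s h y v j (b : bool) :
  vote s j h y = b%:R -> vote_prob s h y v != 0 -> v j = b.
Proof.
move=> Hj Hv; apply/eqP; apply: contraNT Hv => Hne.
apply/prodf_eq0; exists j => //.
move: Hne Hj; case: (v j); case: b => //= _ ->; rewrite ?subrr //.
Qed.

Lemma passes_mono (v v' : {ffun 'I_n -> bool}) :
  (forall j, v j -> v' j) -> passes v -> passes v'.
Proof.
move=> H; rewrite /passes => Hp; apply: (leq_trans Hp).
rewrite leq_mul2l /=; apply: subset_leq_card; apply/subsetP => j.
by rewrite !inE; apply: H.
Qed.

End Votes.

Set Implicit Arguments.
Unset Strict Implicit.
Unset Printing Implicit Defensive.

Section Game.
Variables (X : Type) (n m : nat) (u : 'I_n -> X -> R) (uA : X -> R) (g : 'I_m -> X).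
Hypothesis hgen : forall (p : player n) (j k : 'I_m),
  util u uA p (g j) = util u uA p (g k) -> j = k.
Hypothesis n_pos : (0 < n)%N.

Definition beats (y x : 'I_m) : bool := maj_pref u (g y) (g x).
Definition Bpred (x : 'I_m) : pred 'I_m := fun j => (j == x) || beats j x.
Definition B0 (x : 'I_m) : 'I_m := [arg max_(j > x | Bpred x j) uA (g j)]%O.

Lemma B0P x : Bpred x (B0 x) /\ forall y, Bpred x y -> uA (g y) <= uA (g (B0 x)).
Proof. rewrite /B0; case: arg_maxP => //; by rewrite /Bpred eqxx. Qed.

Definition Bk k x := iter k B0 x.

Definition outc k (z y : 'I_m) : 'I_m :=
  if beats (Bk k y) (Bk k z) then Bk k y else Bk k z.

Definition vstar k (z y : 'I_m) : {ffun 'I_n -> bool} :=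
  [ffun i => u i (g (Bk k z)) < u i (g (Bk k y))].

Lemma passes_vstar k z y : passes (vstar k z y) = beats (Bk k y) (Bk k z).
Proof.
rewrite /passes /beats /maj_pref.
have -> : [set i | vstar k z y i] = [set i | u i (g (Bk k z)) < u i (g (Bk k y))].
  by apply/setP => i; rewrite !inE ffunE.
by [].
Qed.

Lemma outc_B0 k z : outc k z (B0 z) = Bk k.+1 z.
Proof.
rewrite /outc /Bk -iterSr iterS; set w := iter k B0 z.
case: (B0P w) => /orP [/eqP ->|->] _ //; by rewrite if_same.
Qed.

Lemma outc_le k z y : uA (g (outc k z y)) <= uA (g (Bk k.+1 z)).
Proof.
rewrite /Bk iterS; case: (B0P (iter k B0 z)) => _ H; apply: H.
rewrite /outc /Bpred; case: ifP => [->|_]; by rewrite ?orbT ?eqxx.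
Qed.

Lemma uA_inj j k : uA (g j) = uA (g k) -> j = k.
Proof. move=> H; exact: (@hgen None j k H). Qed.

Lemma u_inj i j k : u i (g j) = u i (g k) -> j = k.
Proof. move=> H; exact: (@hgen (Some i) j k H). Qed.

Variables (T : nat) (x0 : 'I_m).

Lemma cur_rcons (h : history m n) r :
  cur_default x0 (rcons h r) = if passes r.2 then r.1 else cur_default x0 h.
Proof. by rewrite /cur_default foldl_rcons. Qed.

Definition charP (s : profile m n) k :=
  forall h : history m n, (size h + k)%N = T ->
    forall f, cont s f x0 k h = f (Bk k (cur_default x0 h)).

Lemma Bk_if k (b : bool) y z : Bk k (if b then y else z) = if b then Bk k y else Bk k z.
Proof. by case: b. Qed.

Lemma vcont_char s k h y f : charP s k -> (size h + k.+1)%N = T ->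
  (forall i, vote s i h y = (vstar k (cur_default x0 h) y i)%:R) ->
  vcont s f x0 k h y = f (outc k (cur_default x0 h) y).
Proof.
move=> IH Hs Hv; rewrite /vcont.
rewrite (@sum_supp_const _ _ _ (f (outc k (cur_default x0 h) y))).
  by rewrite sum_vote_prob mulr1.
move=> v Hv0.
have -> : v = vstar k (cur_default x0 h) y.
  by apply/ffunP => i; apply: (vote_prob_supp (Hv i) Hv0).
rewrite IH; last by rewrite size_rcons addSnnS.
by rewrite cur_rcons /= Bk_if passes_vstar.
Qed.

Lemma vcont_same s k h y f : charP s k -> (size h + k.+1)%N = T ->
  Bk k y = Bk k (cur_default x0 h) ->
  vcont s f x0 k h y = f (Bk k (cur_default x0 h)).
Proof.
move=> IH Hs Hy; rewrite /vcont.
rewrite (@sum_supp_const _ _ _ (f (Bk k (cur_default x0 h)))).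
  by rewrite sum_vote_prob mulr1.
move=> v _; rewrite IH; last by rewrite size_rcons addSnnS.
by rewrite cur_rcons /= Bk_if Hy if_same.
Qed.

Lemma vcont_out s k h y f : charP s k -> (size h + k.+1)%N = T ->
  (Bk k y != Bk k (cur_default x0 h) ->
   forall i, vote s i h y = (vstar k (cur_default x0 h) y i)%:R) ->
  vcont s f x0 k h y = f (outc k (cur_default x0 h) y).
Proof.
move=> IH Hs Hv; case: (eqVneq (Bk k y) (Bk k (cur_default x0 h))) => Hy.
  rewrite vcont_same // /outc Hy; by rewrite if_same.
by apply: vcont_char => //; apply: Hv.
Qed.


Lemma cont_S (s : profile m n) f k h :
  cont s f x0 k.+1 h = \sum_y propose s h y * vcont s f x0 k h y.
Proof. by []. Qed.

Lemma cont_local (s s' : profile m n) f N :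
  (forall h' : history m n, (N <= size h')%N ->
     (forall y, propose s' h' y = propose s h' y) /\
     (forall i y, vote s' i h' y = vote s i h' y)) ->
  forall k (h : history m n), (N <= size h)%N -> cont s' f x0 k h = cont s f x0 k h.
Proof.
move=> H; elim=> [//|k IH] h Hh; rewrite !cont_S.
apply: eq_bigr => y _; case: (H h Hh) => Hp Hv; rewrite Hp /vcont; congr (_ * _).
apply: eq_bigr => v _; rewrite IH; last by rewrite size_rcons; apply: leqW.
congr (_ * _); rewrite /vote_prob; apply: eq_bigr => i _; by rewrite Hv.
Qed.

Lemma eq_char s : equilibrium u uA g T x0 s -> forall k, (k <= T)%N -> charP s k.
Proof.
case=> [[Hval Hsp] Hpiv].
elim=> [_ h _ f //|k IH HkT].
have {}IH := IH (ltnW HkT).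
move=> h Hs f; set z := cur_default x0 h.
have HT : ((T - size h).-1 = k)%N by rewrite -Hs; rewrite addnC addnK.
have HT' : (T - size h = k.+1)%N by rewrite -Hs; rewrite addnC addnK.
have Hlt : (size h < T)%N by rewrite -Hs -addSnnS leq_addr.
have Hv : forall y f, vcont s f x0 k h y = f (outc k z y).
  move=> y f'; apply: (@vcont_out s k h y f' IH Hs) => Hne i.
  have Hpi := Hpiv h y Hlt (Bk k y) (Bk k z); rewrite HT in Hpi.
  have H1 : forall v, passes v -> forall w,
      cont s (fun j => (j == w)%:R) x0 k (rcons h (y, v)) = (w == Bk k y)%:R.
    move=> v Hp w; rewrite IH; last by rewrite size_rcons addSnnS.
    by rewrite cur_rcons /= Hp eq_sym.
  have H2 : forall v, ~~ passes v -> forall w,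
      cont s (fun j => (j == w)%:R) x0 k (rcons h (y, v)) = (w == Bk k z)%:R.
    move=> v /negbTE Hp w; rewrite IH; last by rewrite size_rcons addSnnS.
    by rewrite cur_rcons /= Hp eq_sym.
  have [Hpv1 Hpv0] := Hpi H1 H2 i.
  rewrite /vstar ffunE.
  case: (ltgtP (u i (g (Bk k z))) (u i (g (Bk k y)))) => Hc.
  - by rewrite Hpv1.
  - by rewrite Hpv0.
  - by move: Hne; rewrite (u_inj Hc) eqxx.
case: (Hval) => Hp0 Hp1 Hv01.
pose s' := @Profile m n
  (fun h' y => if h' == h then (y == B0 z)%:R else propose s h' y) (vote s).
have Hval' : valid_profile s'.
  split.
  - move=> h' y /=; case: (h' == h); [by rewrite ler0n | exact: Hp0].
  - move=> h' /=; case: (h' == h); [exact: sum_pt1 | exact: Hp1].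
  - exact: Hv01.
have := Hsp None s' Hval' (fun _ _ _ => erefl).
case=> /(_ h Hlt) Hle _; move: Hle; rewrite HT' !cont_S /=.
rewrite eqxx.
have Hloc : forall f', vcont s' f' x0 k h (B0 z) = vcont s f' x0 k h (B0 z).
  move=> f'; rewrite /vcont; apply: eq_bigr => v _; congr (_ * _).
  apply: (@cont_local s s' f' (size h).+1); last by rewrite size_rcons.
  move=> h' Hh'; have Hne : (h' == h) = false.
    by apply/negbTE; apply: contraTneq Hh' => ->; rewrite ltnn.
  by split => [y|i y] //=; rewrite Hne.
rewrite (eq_bigr (fun y => (y == B0 z)%:R * vcont s' (fun j => uA (g j)) x0 k h y)) //.
rewrite sum_pt Hloc Hv outc_B0.
rewrite (eq_bigr (fun y => propose s h y * uA (g (outc k z y)))); last by move=> y _; rewrite Hv.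
move=> Hge.
have Hsupp := @sum_supp_eq _ (propose s h) (fun y => uA (g (outc k z y)))
  (uA (g (Bk k.+1 z))) (Hp0 h) (fun y => outc_le k z y).
rewrite Hp1 mulr1 in Hsupp; have {}Hsupp := Hsupp Hge.
rewrite (eq_bigr (fun y => propose s h y * f (outc k z y))); last by move=> y _; rewrite Hv.
rewrite (@sum_supp_const _ _ _ (f (Bk k.+1 z))) ?Hp1 ?mulr1 //.
by move=> y /Hsupp /uA_inj ->.
Qed.

Definition sE : profile m n := @Profile m n
  (fun h y => (y == B0 (cur_default x0 h))%:R)
  (fun i h y => (vstar (T - size h).-1 (cur_default x0 h) y i)%:R).

Lemma valid_sE : valid_profile sE.
Proof.
split => /=.
- by move=> h y; rewrite ler0n.
- by move=> h; rewrite sum_pt1.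
- by move=> i h y; case: (vstar _ _ _ _) => /=; rewrite ?ler01 ?lexx.
Qed.

Lemma HTk (h : history m n) k : (size h + k.+1)%N = T -> ((T - size h).-1 = k)%N.
Proof. by move=> <-; rewrite addnC addnK. Qed.

Lemma charE : forall k, charP sE k.
Proof.
elim=> [h _ f //|k IH] h Hs f; set z := cur_default x0 h.
rewrite cont_S /=.
rewrite (eq_bigr (fun y => (y == B0 z)%:R * f (outc k z y))).
  by rewrite sum_pt outc_B0.
move=> y _; congr (_ * _); apply: (@vcont_char sE k h y f IH Hs) => i /=.
by rewrite (HTk Hs).
Qed.

Lemma vdevE (p : player n) (s' : profile m n) k (h : history m n) y :
  valid_profile s' -> unilateral p sE s' ->
  (forall h' : history m n, (size h' + k)%N = T ->
     cont s' (fun j => util u uA p (g j)) x0 k h' <=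
     cont sE (fun j => util u uA p (g j)) x0 k h') ->
  (size h + k.+1)%N = T ->
  vcont s' (fun j => util u uA p (g j)) x0 k h y <=
  vcont sE (fun j => util u uA p (g j)) x0 k h y.
Proof.
move=> Hval Hun IH Hs; set z := cur_default x0 h.
case: Hval => _ _ Hv01.
have Hvot : forall j, vote sE j h y = (vstar k z y j)%:R by move=> j /=; rewrite (HTk Hs).
rewrite (@vcont_char sE k h y _ (@charE k) Hs Hvot).
have Hrc : forall v, (size (rcons h (y, v)) + k)%N = T by move=> v; rewrite size_rcons addSnnS.
apply: (@le_trans _ _ (\sum_v vote_prob s' h y v *
    util u uA p (g (Bk k (if passes v then y else z))))).
  apply: ler_sum => v _; apply: ler_wpM2l; first exact: vote_prob_ge0.
  by have := IH _ (Hrc v); rewrite (charE (Hrc v)) cur_rcons.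
rewrite -[X in _ <= X]mulr1 -(sum_vote_prob s' h y).
apply: sum_supp_le; first by move=> v; exact: vote_prob_ge0.
move=> v Hv0; rewrite Bk_if /outc -passes_vstar.
have Hag : forall j, vote s' j h y = vote sE j h y -> v j = vstar k z y j.
  by move=> j Hj; apply: (vote_prob_supp _ Hv0); rewrite Hj Hvot.
clear IH; case: p Hun Hag => [i|] /= Hun Hag; last first.
  have -> : v = vstar k z y by apply/ffunP => j; apply: Hag; rewrite Hun.
  by [].
case: Hun => _ Hun.
case: (eqVneq (passes v) (passes (vstar k z y))) => [->//|Hne].
have Hvi : v i != vstar k z y i.
  apply: contraNneq Hne => Hi; rewrite (_ : v = vstar k z y) ?eqxx //; apply/ffunP => j.
  case: (eqVneq j i) => [->//|/eqP Hji]; apply: Hag; exact: Hun.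
have Hoth : forall j, j != i -> v j = vstar k z y j by move=> j /eqP Hji; apply: Hag; exact: Hun.
move: Hvi Hne; rewrite {2 3}/vstar ffunE.
case Hvs : (u i (g (Bk k z)) < u i (g (Bk k y))); case Hv : (v i) => //= _ Hne.
- have Hm : passes v -> passes (vstar k z y).
    apply: passes_mono => j; case: (eqVneq j i) => [->|/Hoth ->//]; by rewrite Hv.
  move: Hne; case Hpv : (passes v); case Hps : (passes (vstar k z y)) => //.
  + by rewrite Hm in Hps.
  + by move=> _ /=; rewrite ltW.
- have Hm : passes (vstar k z y) -> passes v.
    apply: passes_mono => j; case: (eqVneq j i) => [->|/Hoth ->//]; by rewrite Hv.
  move: Hne; case Hpv : (passes v); case Hps : (passes (vstar k z y)) => //.
  + by move=> _ /=; rewrite leNgt Hvs.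
  + by rewrite Hm in Hpv.
Qed.

Lemma devE (p : player n) (s' : profile m n) :
  valid_profile s' -> unilateral p sE s' -> forall k (h : history m n),
  (size h + k)%N = T ->
     cont s' (fun j => util u uA p (g j)) x0 k h <=
     cont sE (fun j => util u uA p (g j)) x0 k h.
Proof.
move=> Hval Hun; elim=> [h _ //|k IH h Hs].
have Hv := fun y => @vdevE p s' k h y Hval Hun IH Hs.
rewrite [cont s' _ _ _ _]cont_S; set z := cur_default x0 h.
case: (Hval) => Hp0 Hp1 _.
clear IH; case: p Hun Hv => [i|] Hun Hv.
  rewrite cont_S; case: Hun => Hpr _; apply: ler_sum => y _; rewrite Hpr.
  by apply: ler_wpM2l => //=; rewrite ler0n.
apply: (@le_trans _ _ (\sum_y propose s' h y * uA (g (outc k z y)))).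
  apply: ler_sum => y _; apply: ler_wpM2l => //.
  have := Hv y; rewrite (@vcont_char sE k h y _ (@charE k) Hs) //.
  by move=> j /=; rewrite (HTk Hs).
rewrite (charE Hs).
rewrite -[X in _ <= X]mulr1 -(Hp1 h); apply: sum_supp_le => // y _.
exact: outc_le.
Qed.

Lemma eq_sE : equilibrium u uA g T x0 sE.
Proof.
split; first split; first exact: valid_sE.
  move=> p s' Hval Hun; split.
    move=> h Hlt; apply: (@devE p s' Hval Hun (T - size h)%N h).
    by rewrite subnKC //; apply: ltnW.
  move=> h y Hlt; apply: (@vdevE p s' (T - size h)%N.-1 h y Hval Hun).
    by move=> h' Hs'; apply: (@devE p s' Hval Hun _ h' Hs').
  by rewrite prednK ?subn_gt0 // subnKC //; apply: ltnW.
move=> h y Hlt x z H1 H2 i.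
set k := (T - size h).-1.
have Hs : (size h + k.+1)%N = T by rewrite /k prednK ?subn_gt0 // subnKC //; apply: ltnW.
have Hrc : forall v, (size (rcons h (y, v)) + k)%N = T by move=> v; rewrite size_rcons addSnnS.
pose vT : {ffun 'I_n -> bool} := [ffun => true].
pose vF : {ffun 'I_n -> bool} := [ffun => false].
have pT : passes vT.
  rewrite /passes; have -> : [set j | vT j] = [set: 'I_n] by apply/setP => j; rewrite !inE ffunE.
  by rewrite cardsT card_ord mul2n -addnn -{1}[n]add0n ltn_add2r.
have pF : ~~ passes vF.
  rewrite /passes; have -> : [set j | vF j] = set0 by apply/setP => j; rewrite !inE ffunE.
  by rewrite cards0.
have Ex : Bk k y = x.
  have := H1 vT pT x; rewrite (charE (Hrc vT)) cur_rcons /= pT eqxx.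
  by case: eqP => // _ /eqP; rewrite eq_sym oner_eq0.
have Ez : Bk k (cur_default x0 h) = z.
  have := H2 vF pF z; rewrite (charE (Hrc vF)) cur_rcons /= (negbTE pF) eqxx.
  by case: eqP => // _ /eqP; rewrite eq_sym oner_eq0.
rewrite /= /vstar ffunE -/k Ex Ez; split => [->//|Hlt'].
by rewrite ltNge (ltW Hlt').
Qed.

End Game.

Set Implicit Arguments.
Unset Strict Implicit.
Unset Printing Implicit Defensive.

Lemma list_radius (A : Type) (P : A -> R -> Prop) :
  (forall a r r', 0 < r' -> r' <= r -> P a r -> P a r') ->
  forall s : list A, (forall a, List.In a s -> exists r, 0 < r /\ P a r) ->
  exists r, 0 < r /\ forall a, List.In a s -> P a r.
Proof.
move=> Hm; elim=> [|a s IH] H.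
  by exists 1; split => // a [].
have [r1 [r1p P1]] := H a (or_introl erefl).
have [r2 [r2p P2]] := IH (fun b Hb => H b (or_intror Hb)).
exists (Num.min r1 r2); split; first by rewrite lt_min r1p r2p.
have Hp : 0 < Num.min r1 r2 by rewrite lt_min r1p r2p.
move=> b [<-|Hb].
  by apply: (Hm _ r1) => //; rewrite ge_min lexx.
by apply: (Hm _ r2) => //; [rewrite ge_min lexx orbT | apply: P2].
Qed.

Lemma in_seq_In (T : eqType) (x : T) (s : seq T) : x \in s -> List.In x s.
Proof.
elim: s => [//|a s IH]; rewrite in_cons => /orP [/eqP ->|/IH H]; by [left|right].
Qed.

Lemma fin_radius (n : nat) (P : 'I_n -> R -> Prop) :
  (forall a r r', 0 < r' -> r' <= r -> P a r -> P a r') ->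
  (forall a, exists r, 0 < r /\ P a r) ->
  exists r, 0 < r /\ forall a, P a r.
Proof.
move=> Hm H; have [r [rp Hr]] := list_radius Hm (s := enum 'I_n) (fun a _ => H a).
by exists r; split => // a; apply: Hr; apply: in_seq_In; rewrite mem_enum.
Qed.

Section Topo.
Variables (X : Type) (d : X -> X -> R) (n : nat) (u : 'I_n -> X -> R) (uA : X -> R).
Hypothesis hm : is_metric d.
Hypothesis hcu : forall i, dcontinuous d (u i).
Hypothesis hcA : dcontinuous d uA.

Lemma d_ge0 x y : 0 <= d x y. Proof. by case: hm. Qed.
Lemma d_self x : d x x = 0. Proof. by case: hm => _ H _ _; exact: (proj2 (H x x) erefl). Qed.
Lemma d_sym x y : d x y = d y x. Proof. by case: hm. Qed.
Lemma d_tri x y z : d x z <= d x y + d y z. Proof. by case: hm. Qed.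
Lemma d_eq0 x y : d x y = 0 -> x = y. Proof. by case: hm => _ H _ _; exact: (proj1 (H x y)). Qed.

Lemma ball_open c r : dopen d (fun y => d c y < r).
Proof.
move=> x Hx; exists (r - d c x); split; first by rewrite subr_gt0.
move=> y Hy; have := d_tri c x y; lra.
Qed.

Lemma util_cont (p : player n) : dcontinuous d (util u uA p).
Proof. by case: p => [i|] /=; [apply: hcu | apply: hcA]. Qed.

Lemma cont_lt (f : X -> R) x a : dcontinuous d f -> f x < a ->
  exists r, 0 < r /\ forall y, d x y < r -> f y < a.
Proof.
move=> Hc Hx; have [r [rp Hr]] := Hc x (a - f x) (ltac:(rewrite subr_gt0 //)).
exists r; split => // y /Hr; rewrite ltr_norml; lra.
Qed.

Lemma cont_gt (f : X -> R) x a : dcontinuous d f -> a < f x ->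
  exists r, 0 < r /\ forall y, d x y < r -> a < f y.
Proof.
move=> Hc Hx; have [r [rp Hr]] := Hc x (f x - a) (ltac:(rewrite subr_gt0 //)).
exists r; split => // y /Hr; rewrite ltr_norml; lra.
Qed.

Hypothesis hc : dcompact d.

Lemma list_lb (f : X -> R) (s : list X) : exists L, forall c, List.In c s -> L <= f c.
Proof.
elim: s => [|a s [L HL]]; first by exists 0.
exists (Num.min (f a) L) => c [<-|Hc]; first by rewrite ge_min lexx.
by rewrite ge_min HL ?orbT.
Qed.

Lemma lower_bound : exists L, forall x, L <= uA x.
Proof.
pose U := fun c y => exists r, 0 < r /\ (forall z, d c z < r -> uA c - 1 < uA z) /\ d c y < r.
have Uo : forall c, dopen d (U c).
  move=> c y [r [rp [Hr Hy]]]; exists (r - d c y); split; first by rewrite subr_gt0.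
  move=> y' Hy'; exists r; do 2 split => //; have := d_tri c y y'; lra.
have Uc : forall x, exists c, U c x.
  move=> x; have [r [rp Hr]] := cont_gt (x := x) (a := uA x - 1) hcA (ltac:(lra)).
  by exists x, r; do 2 split => //; rewrite d_self.
have [s Hs] := hc Uo Uc.
have [L HL] := list_lb (fun c => uA c - 1) s.
exists L => x; have [c [Hc [r [_ [Hr Hx]]]]] := Hs x.
by have := HL c Hc; have := Hr x Hx; lra.
Qed.

Definition certP (x y : X) (r r' gm : R) : Prop :=
  0 < r /\ 0 < r' /\ 0 < gm /\ forall x' y', d x x' < r -> d y y' < r' ->
    maj_pref u y' x' /\ uA x' + gm <= uA y'.

Lemma cert_ex x y : uA x < uA y -> maj_pref u y x -> exists r r' gm, certP x y r r' gm.
Proof.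
move=> HA Hm.
have [ru [rup Hru]] : exists r, 0 < r /\ forall i x', d x x' < r ->
    u i x < u i y -> u i x' < u i x + (u i y - u i x) / 2.
  pose P := (fun i r => forall x', d x x' < r ->
    u i x < u i y -> u i x' < u i x + (u i y - u i x) / 2).
  have Pm : forall i r r', 0 < r' -> r' <= r -> P i r -> P i r'.
    move=> i r r' r'p Hle H x' Hx'; apply: H; exact: lt_le_trans Hx' Hle.
  have Pe : forall i, exists r, 0 < r /\ P i r.
    move=> i; case: (ltP (u i x) (u i y)) => Hi; last first.
      by exists 1; split => // x' _ H; move: Hi; rewrite leNgt H.
    have [r [rp Hr]] := cont_lt (x := x) (a := u i x + (u i y - u i x) / 2) (hcu i) (ltac:(lra)).
    by exists r; split => // x' /Hr.
  have [r [rp Hr]] := @fin_radius n P Pm Pe.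
  by exists r; split => // i; apply: Hr.
have [ru' [ru'p Hru']] : exists r, 0 < r /\ forall i y', d y y' < r ->
    u i x < u i y -> u i y - (u i y - u i x) / 2 < u i y'.
  pose P := (fun i r => forall y', d y y' < r ->
    u i x < u i y -> u i y - (u i y - u i x) / 2 < u i y').
  have Pm : forall i r r', 0 < r' -> r' <= r -> P i r -> P i r'.
    move=> i r r' r'p Hle H y' Hy'; apply: H; exact: lt_le_trans Hy' Hle.
  have Pe : forall i, exists r, 0 < r /\ P i r.
    move=> i; case: (ltP (u i x) (u i y)) => Hi; last first.
      by exists 1; split => // y' _ H; move: Hi; rewrite leNgt H.
    have [r [rp Hr]] := cont_gt (x := y) (a := u i y - (u i y - u i x) / 2) (hcu i) (ltac:(lra)).
    by exists r; split => // y' /Hr.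
  have [r [rp Hr]] := @fin_radius n P Pm Pe.
  by exists r; split => // i; apply: Hr.
have [ra [rap Hra]] := cont_lt (x := x) (a := uA x + (uA y - uA x) / 4) hcA (ltac:(lra)).
have [ra' [ra'p Hra']] := cont_gt (x := y) (a := uA y - (uA y - uA x) / 4) hcA (ltac:(lra)).
exists (Num.min ru ra), (Num.min ru' ra'), ((uA y - uA x) / 2).
split; first by rewrite lt_min rup rap.
split; first by rewrite lt_min ru'p ra'p.
split; first lra.
move=> x' y'; rewrite !lt_min => /andP [Hx1 Hx2] /andP [Hy1 Hy2]; split.
  move: Hm; rewrite /maj_pref => Hm; apply: (leq_trans Hm).
  rewrite leq_mul2l /=; apply: subset_leq_card; apply/subsetP => i.
  rewrite !inE => Hi; have := Hru i x' Hx1 Hi; have := Hru' i y' Hy1 Hi; lra.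
by have := Hra x' Hx2; have := Hra' y' Hy2; lra.
Qed.

Record cert := Cert { cx : X; cy : X; cr : R; cr' : R; cg : R;
  cP : certP cx cy cr cr' cg }.

Variables (xstar : X).

Lemma improve (delta : R) : 0 < delta -> manipulable u uA -> in_XAstar uA xstar ->
  exists e, 0 < e /\ forall eps m (g : 'I_m -> X), eps < e ->
    generic_grid d u uA eps g -> forall w,
    ~ (uA xstar - delta < uA (g w)) -> uA (g w) + e <= uA (g (B0 u uA g w)).
Proof.
move=> dp Hman Hstar.
pose U := fun (i : option cert) => match i with
  | None => fun z => uA xstar - delta < uA z
  | Some c => fun z => d (cx c) z < cr c end.
have Uo : forall i, dopen d (U i).
  case=> [c|] /=; first exact: ball_open.
  move=> z Hz; have [r [rp Hr]] := cont_gt hcA Hz; by exists r.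
have Uc : forall x, exists i, U i x.
  move=> x; case: (boolP (uA xstar - delta < uA x)) => Hx; first by exists None.
  have Hnot : ~ in_XAstar uA x.
    by move=> H; move: Hx; have := H xstar; lra.
  have [y [Hy1 Hy2]] := Hman x Hnot.
  have [r [r' [gm Hc]]] := cert_ex Hy1 Hy2.
  exists (Some (Cert Hc)) => /=; case: Hc => rp _; by rewrite d_self.
have [s Hs] := hc Uo Uc.
pose P := fun (i : option cert) e => match i with
    | None => True | Some c => e <= cr' c /\ e <= cg c end.
have Pm : forall i r r', 0 < r' -> r' <= r -> P i r -> P i r'.
  move=> [c|] r r' _ Hle //= [H1 H2]; split; exact: le_trans Hle _.
have Pe : forall i, List.In i s -> exists r, 0 < r /\ P i r.
  move=> [c|] _ /=; last by exists 1.
  case: (cP c) => _ [r'p [gp _]].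
  exists (Num.min (cr' c) (cg c)); rewrite lt_min r'p gp /=.
  by rewrite !ge_min !lexx orbT.
have [e [ep He]] := @list_radius _ P Pm s Pe.
exists e; split => // eps m g Heps [Hinj [r [Hr Hcov]] Hgen] w Hw.
have [[c|] [Hi HU]] := Hs (g w); last by [].
have [Hre Hge] := He _ Hi.
case: (cP c) => _ [_ [_ Hcert]].
have [j Hj] := Hcov (cy c).
have [Hmj HAj] := Hcert (g w) (g j) HU (ltac:(lra)).
have [_ Hmax] := B0P u uA g w.
have := Hmax j (ltac:(by rewrite /Bpred /beats Hmj orbT)); lra.
Qed.

End Topo.

Section Forward.
Variables (X : Type) (d : X -> X -> R) (n : nat) (u : 'I_n -> X -> R) (uA : X -> R) (xstar : X).

Lemma forward : is_metric d -> dcompact d ->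
  (forall i, dcontinuous d (u i)) -> dcontinuous d uA ->
  in_XAstar uA xstar -> manipulable u uA ->
  (forall delta : R, 0 < delta ->
      exists eps0 : R, 0 < eps0 /\
      exists T0 : nat,
        forall (eps : R) (m : nat) (g : 'I_m -> X),
          eps < eps0 -> generic_grid d u uA eps g ->
        forall T : nat, (T0 <= T)%N ->
        forall (x0 : 'I_m) (s : profile m n),
          equilibrium u uA g T x0 s ->
          uA xstar - delta <= setter_payoff uA g T x0 s).
Proof.
move=> hm hc hcu hcA hstar hman delta dp.
have [e [ep He]] := improve hm hcu hcA hc (xstar := xstar) dp hman hstar.
have [L HL] := lower_bound hm hcA hc.
have HLs : 0 <= (uA xstar - L) / e.
  by apply: divr_ge0 => //; [have := HL xstar; lra | apply: ltW].
exists e; split => //; exists (Num.Def.archi_bound ((uA xstar - L) / e)).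
move=> eps m g Heps Hg T HT x0 s Heq.
have hgen : forall (p : player n) (j k : 'I_m),
    util u uA p (g j) = util u uA p (g k) -> j = k.
  by case: Hg => Hinj _ Hgen p j k H; apply: Hinj; apply: (Hgen p).
rewrite /setter_payoff (eq_char hgen Heq (leqnn T) (h := [::]) (add0n T)) /=.
have Hit : forall k w, uA xstar - delta <= uA (g (Bk u uA g k w)) \/
    L + k%:R * e <= uA (g (Bk u uA g k w)).
  elim=> [w|k IH w]; first by right; rewrite mul0r addr0.
  rewrite /Bk iterS -/(Bk u uA g k w); set w' := Bk u uA g k w.
  have Hmono : uA (g w') <= uA (g (B0 u uA g w')).
    by case: (B0P u uA g w') => _ H; apply: H; rewrite /Bpred eqxx.
  case: (boolP (uA xstar - delta < uA (g w'))) => Hw.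
    by left; apply: le_trans Hmono; apply: ltW.
  have Hw' : ~ (uA xstar - delta < uA (g w')) by apply/negP.
  have Himp := He eps m g Heps Hg w' Hw'.
  rewrite -addn1 natrD mulrDl mul1r.
  by case: (IH w) => H; [left|right]; lra.
case: (Hit T x0) => // H; exfalso.
have Hb := archi_boundP HLs.
have HT' : (Num.Def.archi_bound ((uA xstar - L) / e))%:R <= (T%:R : R) by rewrite ler_nat.
have : uA xstar - L < T%:R * e.
  by rewrite -ltr_pdivrMr //; apply: lt_le_trans HT'.
have := hstar (g (Bk u uA g T x0)); lra.
Qed.

End Forward.

Section Grid.
Variables (X : Type) (d : X -> X -> R) (n : nat) (u : 'I_n -> X -> R) (uA : X -> R).
Hypothesis hm : is_metric d.
Hypothesis hcu : forall i, dcontinuous d (u i).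
Hypothesis hcA : dcontinuous d uA.
Hypothesis hc : dcompact d.
Hypothesis hthin : thin_indifference d u uA.

Lemma net rho : 0 < rho -> exists cs : list X, forall x, exists c, List.In c cs /\ d c x < rho.
Proof.
move=> rp.
have Hcov : forall x, exists c, d c x < rho by move=> x; exists x; rewrite (d_self hm).
have [cs Hcs] := hc (U := fun c y => d c y < rho) (fun c => @ball_open _ _ hm c rho) Hcov.
by exists cs.
Qed.

Lemma baire (K : Type) (E : K -> X -> Prop) :
  (forall k z, ~ E k z -> exists r, 0 < r /\ forall z', d z z' < r -> ~ E k z') ->
  forall (ks : list K) c rho, 0 < rho ->
  (forall z, d c z < rho -> exists k, List.In k ks /\ E k z) ->
  exists k y r, List.In k ks /\ 0 < r /\ forall z, d y z < r -> d c z < rho /\ E k z.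
Proof.
move=> Hcl; elim=> [|k ks IH] c rho rp H.
  by have [k [[] _]] := H c (ltac:(by rewrite (d_self hm))).
case: (classic (exists z, d c z < rho /\ ~ E k z)) => [[z [Hz HE]]|Hno]; last first.
  exists k, c, rho; split; first by left.
  split => // z Hz; split => //; apply: NNPP => HE; apply: Hno; by exists z.
have [r1 [r1p Hr1]] := Hcl k z HE.
set r2 := rho - d c z.
have r2p : 0 < r2 by rewrite /r2 subr_gt0.
have Hmp : 0 < Num.min r1 r2 by rewrite lt_min r1p r2p.
have Hsub : forall z', d z z' < Num.min r1 r2 -> exists k0, List.In k0 ks /\ E k0 z'.
  move=> z' Hz'; move: (Hz'); rewrite lt_min => /andP [Hz1 Hz2].
  have Hcz' : d c z' < rho.
    by have := d_tri hm c z z'; rewrite /r2 in Hz2; lra.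
  have [k'' [[<-|Hin] HE']] := H z' Hcz'; first by have := Hr1 z' Hz1.
  by exists k''.
have [k' [y [r [Hk' [rp0 Hr]]]]] := IH z (Num.min r1 r2) Hmp Hsub.
exists k', y, r; split; first by right.
split => // z' /Hr [Hz' HE']; split => //.
move: Hz'; rewrite lt_min => /andP [_ Hz2].
have := d_tri hm c z z'; rewrite /r2 in Hz2; lra.
Qed.

Definition players : list (player n) := None :: map Some (enum 'I_n).

Lemma in_players p : List.In p players.
Proof.
case: p => [i|]; last by left.
right; apply: in_seq_In; rewrite mem_map ?mem_enum //; by move=> a b [].
Qed.

Lemma extend (Q : list X) c rho : 0 < rho -> exists q, d c q < rho /\
  (List.In q Q \/ forall p b, List.In b Q -> util u uA p q <> util u uA p b).
Proof.
move=> rp; apply: NNPP => Hno.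
have Hall : forall z, d c z < rho -> ~ List.In z Q /\
    exists pb, List.In pb (List.list_prod players Q) /\ util u uA pb.1 z = util u uA pb.1 pb.2.
  move=> z Hz; split.
    by move=> Hin; apply: Hno; exists z; split => //; left.
  apply: NNPP => Hne; apply: Hno; exists z; split => //; right => p b Hb Heq.
  apply: Hne; exists (p, b); split => //; apply/List.in_prod_iff; split => //.
  exact: in_players.
have Hcl : forall (pb : player n * X) z, ~ (util u uA pb.1 z = util u uA pb.1 pb.2) ->
    exists r, 0 < r /\ forall z', d z z' < r -> ~ (util u uA pb.1 z' = util u uA pb.1 pb.2).
  move=> [p b] z /= Hne.
  case: (ltgtP (util u uA p z) (util u uA p b)) => Hc //.
  - have [r [rp' Hr]] := cont_lt (util_cont hcu hcA p) Hc.
    by exists r; split => // z' /Hr Hlt Heq; move: Hlt; rewrite Heq ltxx.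
  - have [r [rp' Hr]] := cont_gt (util_cont hcu hcA p) Hc.
    by exists r; split => // z' /Hr Hlt Heq; move: Hlt; rewrite Heq ltxx.
have [[p b] [y [r [Hin [rp' Hr]]]]] := baire Hcl rp (fun z Hz => proj2 (Hall z Hz)).
have [_ Hb] := proj1 (List.in_prod_iff _ _ _ _) Hin.
have Hth := hthin (p:=p) (x:=b); apply: Hth; exists y, r; split => // z Hz.
have [Hcz HE] := Hr z Hz; split => // Hzb.
by have [Hnin _] := Hall z Hcz; apply: Hnin; rewrite Hzb.
Qed.

Lemma build (xh : X) rho : 0 < rho -> forall cs : list X, exists Q : list X,
  [/\ List.In xh Q, List.NoDup Q,
      (forall a b p, List.In a Q -> List.In b Q -> util u uA p a = util u uA p b -> a = b) &
      (forall c, List.In c cs -> exists q, List.In q Q /\ d c q < rho)].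
Proof.
move=> rp; elim=> [|c cs [Q [HxQ HnQ HgQ HcQ]]].
  exists [:: xh]; split => //; first by left.
  - by apply: List.NoDup_cons => //; apply: List.NoDup_nil.
  - by move=> a b p [<-|[]] [<-|[]].
have [q [Hq Hor]] := extend Q c rp.
case: (classic (List.In q Q)) => HqQ.
  exists Q; split => // c' [<-|Hc']; [by exists q | exact: HcQ].
case: Hor => // Hdist.
exists (q :: Q); split.
- by right.
- exact: List.NoDup_cons.
- move=> a b p [<-|Ha] [<-|Hb] Heq //.
  + by exfalso; apply: (Hdist p b Hb).
  + by exfalso; apply: (Hdist p a Ha).
  + exact: (HgQ a b p).
- move=> c' [<-|Hc']; first by exists q; split => //; left.
  by have [q' [Hq' Hd]] := HcQ c' Hc'; exists q'; split => //; right.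
Qed.

Lemma length_size (A : Type) (l : list A) : List.length l = size l.
Proof. by elim: l => //= a l ->. Qed.

Lemma grid_exists (xh : X) eps : 0 < eps ->
  exists m (g : 'I_m -> X) (j0 : 'I_m), generic_grid d u uA eps g /\ g j0 = xh.
Proof.
move=> ep; have rp : 0 < eps / 4 by lra.
have [cs Hcs] := net rp.
have [Q [HxQ HnQ HgQ HcQ]] := build xh rp cs.
pose g := fun j : 'I_(size Q) => List.nth (nat_of_ord j) Q xh.
have Hidx : forall q, List.In q Q -> exists j : 'I_(size Q), g j = q.
  move=> q Hq; have [k [Hk Hnth]] := List.In_nth Q q xh Hq.
  have Hk' : (k < size Q)%N by rewrite -length_size; apply/ssrnat.ltP.
  by exists (Ordinal Hk').
have [j0 Hj0] := Hidx xh HxQ.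
exists (size Q), g, j0; split => //; split.
- move=> j k Hjk; apply: val_inj.
  apply: (proj1 (List.NoDup_nth Q xh) HnQ) => //; rewrite length_size; apply/ssrnat.ltP; exact: ltn_ord.
- exists (eps / 2); split; first lra.
  move=> x; have [c [Hc Hcx]] := Hcs x.
  have [q [Hq Hcq]] := HcQ c Hc.
  have [j Hj] := Hidx q Hq; exists j; rewrite Hj.
  have := d_tri hm x c q; rewrite (d_sym hm x c); lra.
- move=> p j k Heq; apply: (HgQ _ _ p) => //; apply: List.nth_In; rewrite length_size; apply/ssrnat.ltP; exact: ltn_ord.
Qed.

End Grid.

Unset Implicit Arguments.

Theorem theorem2 (X : Type) (d : X -> X -> R) (n : nat)
    (u : 'I_n -> X -> R) (uA : X -> R) (xstar : X) :
  is_metric d -> dcompact d -> odd n ->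
  (forall i, dcontinuous d (u i)) -> dcontinuous d uA ->
  (* xstar ∈ X_A^*, so u_A^* = uA xstar *)
  in_XAstar uA xstar ->
  thin_indifference d u uA ->
  ((forall delta : R, 0 < delta ->
      exists eps0 : R, 0 < eps0 /\
      exists T0 : nat,
        forall (eps : R) (m : nat) (g : 'I_m -> X),
          eps < eps0 -> generic_grid d u uA eps g ->
        forall T : nat, (T0 <= T)%N ->
        forall (x0 : 'I_m) (s : profile m n),
          equilibrium u uA g T x0 s ->
          uA xstar - delta <= setter_payoff uA g T x0 s)
   <-> manipulable u uA).
Proof.
move=> hm hc hodd hcu hcA hstar hthin; split; last first.
  exact: forward hm hc hcu hcA hstar.
move=> HL x Hnot; apply: NNPP => Himp.
have Hlt : uA x < uA xstar.
  case: (ltP (uA x) (uA xstar)) => // H; exfalso; apply: Hnot => y.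
  exact: le_trans (hstar y) H.
have dp : 0 < (uA xstar - uA x) / 2 by lra.
have [e0 [e0p [T0 H]]] := HL _ dp.
have e2p : 0 < e0 / 2 by lra.
have [m [g [j0 [Hg Hj0]]]] := grid_exists hm hcu hcA hc hthin x e2p.
have hgen : forall (p : player n) (j k : 'I_m),
    util u uA p (g j) = util u uA p (g k) -> j = k.
  by case: Hg => Hinj _ Hgen p j k Hjk; apply: Hinj; apply: (Hgen p).
have n_pos : (0 < n)%N by move: hodd; case: (n).
have Heq := eq_sE u uA g n_pos T0 j0.
have Hp := H (e0 / 2) m g (ltac:(lra)) Hg T0 (leqnn T0) j0 _ Heq.
move: Hp; rewrite /setter_payoff (eq_char hgen Heq (leqnn T0) (h := [::]) (add0n T0)) /=.
have HB : B0 u uA g j0 = j0.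
  case: (eqVneq (B0 u uA g j0) j0) => // Hne; exfalso.
  have [HB Hmax] := B0P u uA g j0.
  have Hle := Hmax j0 (ltac:(by rewrite /Bpred eqxx)).
  move: HB; rewrite /Bpred (negbTE Hne) /= => Hb.
  apply: Himp; exists (g (B0 u uA g j0)); split.
    rewrite -Hj0 lt_neqAle Hle andbT; apply/eqP => Heq'.
    by move: Hne; rewrite (uA_inj hgen (esym Heq')) eqxx.
  by rewrite -Hj0.
have Hit : forall k, Bk u uA g k j0 = j0.
  by elim=> // k IH; rewrite /Bk iterS -/(Bk u uA g k j0) IH HB.
rewrite Hit Hj0; lra.
Qed.
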